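(* For all nonnegative integers $a_1,a_2,s$, \[ G(a_1,a_2,s)=\sum_{b_1,b_2\ge0}(-1)^{b_1+b_2}\binom{a_1+a_2-b_1-b_2}{s}\binom{a_1+a_2-b_1-b_2}{a_1-b_1}, \] where $\binom{N}{K}=0$ unless $0\le K\le N$.
   Context: For integers $a_1,a_2,s$ with $a=a_1+a_2$, $G(a_1,a_2,s)=\sum_m N_m$, the sum over integers $m$ such that $a_1-m,\ a_2-(s-m),\ m,\ s-m$ are all nonnegative (an empty sum is $0$), where $N_m$ is the number of permutations $\pi$ of $[a]$ that are decreasing within each of four consecutive blocks of positions of lengths $a_1-m,\ a_2-(s-m),\ m,\ s-m$ (in this order; arbitrary between blocks), and have no fixed point ($\pi_i=i$) in the first two blocks. *)

(* Defs.v *)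
From mathcomp Require Import all_boot all_order all_algebra all_fingroup.
Set Implicit Arguments. Unset Strict Implicit. Unset Printing Implicit Defensive.
Import GRing.Theory Num.Theory.

Definition block_of (l1 l2 l3 i : nat) : nat :=
  if i < l1 then 0 else if i < l1 + l2 then 1 else if i < l1 + l2 + l3 then 2 else 3.

(* Only meaningful when m <= a1, m <= s, s-m <= a2. *)
Definition Nm (a1 a2 s m : nat) : nat :=
  let blk := block_of (a1 - m) (a2 - (s - m)) m in
  #|[set p : 'S_(a1 + a2) |
      [forall i : 'I_(a1 + a2), forall j : 'I_(a1 + a2),
         ((i < j) && (blk i == blk j)) ==> (p j < p i)]
      && [forall i : 'I_(a1 + a2), (blk i < 2) ==> (p i != i)]]|.

Definition G (a1 a2 s : nat) : nat :=
  \sum_(0 <= m < s.+1 | (m <= a1) && (s - m <= a2)) Nm a1 a2 s m.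

Definition binZ (N K : int) : int :=
  if ((0 <= K) && (K <= N))%R then Posz 'C(absz N, absz K) else 0%R.

(* Main.v *)
Require Import Defs.
From mathcomp Require Import all_boot all_order all_algebra all_fingroup.
From mathcomp Require Import zify ring.
Import GRing.Theory Num.Theory.
Set Implicit Arguments. Unset Strict Implicit. Unset Printing Implicit Defensive.

Lemma bump_ltb h a b : (bump h a < bump h b) = (a < b).
Proof. rewrite /bump; case: (leqP h a); case: (leqP h b) => /= *; apply/idP/idP; lia. Qed.
Lemma bump_lth h a : (bump h a < h) = (a < h).
Proof. rewrite /bump; case: (leqP h a) => /= *; apply/idP/idP; lia. Qed.
Lemma bump_gth h a : (h < bump h a) = (h <= a).
Proof. rewrite /bump; case: (leqP h a) => /= *; apply/idP/idP; lia. Qed.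

Lemma card_fix n (i k : 'I_n.+1) (P : pred 'S_n.+1) :
  #|[set p : 'S_n.+1 | (p i == k) && P p]| = #|[set q : 'S_n | P (lift_perm i k q)]|.
Proof.
rewrite -!sum1_card.
rewrite (reindex (lift_perm i k)); last first.
  pose ulsf i (s : 'S_n.+1) k := odflt k (unlift (s i) (s (lift i k))).
  have ulsfK i' (s : 'S_n.+1) k': lift (s i') (ulsf i' s k') = s (lift i' k').
    rewrite /ulsf; have:= neq_lift i' k'.
    by rewrite -(can_eq (permK s)) => /unlift_some[] ? ? ->.
  have inj_ulsf: injective (ulsf i _).
    move=> s; apply: can_inj (ulsf (s i) s^-1%g) _ => k'.
    by rewrite {1}/ulsf ulsfK !permK liftK.
  exists (fun s => perm (inj_ulsf s)) => [s _ | s].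
    by apply/permP=> k'; rewrite permE /ulsf lift_perm_lift lift_perm_id liftK.
  rewrite inE => /andP[/eqP si0 _]; apply/permP=> k'.
  case: (unliftP i k') => [k''|] ->; rewrite ?lift_perm_id //.
  by rewrite lift_perm_lift -si0 permE ulsfK.
apply: eq_bigl => q; by rewrite !inE lift_perm_id eqxx.
Qed.

Definition decb n (blk : nat -> nat) (p : 'S_n) : bool :=
  [forall i : 'I_n, forall j : 'I_n, ((i < j) && (blk i == blk j)) ==> (p j < p i)].
Definition nfb n (blk : nat -> nat) c (p : 'S_n) : bool :=
  [forall i : 'I_n, (blk i == c) ==> (p i != i)].
Definition consb n (blk : nat -> nat) (i k : nat) (q : 'S_n) : bool :=
  [forall j : 'I_n, (blk (bump i j) == blk i) ==> ((j < i) == (k <= q j))].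

Lemma dec_lift n blk (i k : 'I_n.+1) (q : 'S_n) :
  decb blk (lift_perm i k q) =
  decb (fun j => blk (bump i j)) q && consb blk i k q.
Proof.
apply/idP/andP.
  move=> /forallP H; split.
    apply/forallP => j; apply/forallP => j'; apply/implyP => /andP[ljj' bjj'].
    have := forallP (H (lift i j)) (lift i j').
    rewrite !lift_perm_lift /= bump_ltb ljj' bjj' /=.
    by rewrite bump_ltb.
  apply/forallP => j; apply/implyP => bj.
  case: (ltnP j i) => ji.
    have := forallP (H (lift i j)) i.
    rewrite lift_perm_id lift_perm_lift /= bump_lth ji (eqP bj) eqxx /=.
    by rewrite bump_gth eq_sym => ->.
  have := forallP (H i) (lift i j).
  rewrite lift_perm_id lift_perm_lift /= bump_gth ji (eqP bj) eqxx /=.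
  by rewrite bump_lth => h; rewrite leqNgt h.
move=> [/forallP Hd /forallP Hc].
apply/forallP => x; apply/forallP => y; apply/implyP => /andP[lxy bxy].
case: (unliftP i x) => [j|] Ex; case: (unliftP i y) => [j'|] Ey; subst x y.
- rewrite !lift_perm_lift /= bump_ltb.
  have := forallP (Hd j) j'; rewrite -(bump_ltb i) lxy bxy; exact.
- rewrite lift_perm_id lift_perm_lift /= bump_gth.
  move: lxy; rewrite /= bump_lth => ji.
  by have := Hc j; rewrite /= in bxy; rewrite bxy ji /= => /eqP <-.
- rewrite lift_perm_id lift_perm_lift /= bump_lth.
  move: lxy; rewrite /= bump_gth => ji.
  have := Hc j'; rewrite /= in bxy; rewrite -(eqP bxy) eqxx ltnNge ji /= => /eqP.
  by move=> H; rewrite ltnNge -H.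
- by rewrite ltnn in lxy.
Qed.

Lemma card_ssum (T : finType) (P : pred T) :
  #|[set x | P x]| = \sum_x (P x : nat).
Proof.
rewrite -sum1_card big_mkcond; apply: eq_bigr => x _; rewrite inE; by case: (P x).
Qed.

Lemma sum_uniq (T : finType) (Q P : pred T) :
  (forall i i', Q i -> Q i' -> P i -> P i' -> i = i') ->
  \sum_(i | Q i) (P i : nat) = [exists i, Q i && P i].
Proof.
move=> U; case: (boolP [exists i, Q i && P i]) => [/existsP[i0 /andP[Q0 P0]]|].
  rewrite (bigD1 i0) //= P0 big1 // => i /andP[Qi ni].
  by case: (boolP (P i)) => // Pi; rewrite (U i i0) ?eqxx in ni.
rewrite negb_exists => /forallP H; rewrite big1 // => i Qi.
by have := H i; rewrite Qi /=; case: (P i).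
Qed.

Lemma nf_lift n blk c (i : 'I_n.+1) (q : 'S_n) :
  nfb blk c (lift_perm i i q) = (blk i != c) && nfb (fun j => blk (bump i j)) c q.
Proof.
apply/forallP/andP.
  move=> H; split.
    by have := H i; rewrite lift_perm_id eqxx implybF.
  apply/forallP => j; have := H (lift i j).
  by rewrite lift_perm_lift (inj_eq (@lift_inj _ i)).
move=> [ni /forallP H] x; case: (unliftP i x) => [j|] ->.
  by rewrite lift_perm_lift (inj_eq (@lift_inj _ i)); exact: H.
by rewrite (negbTE ni).
Qed.

Lemma fix_uniq n blk c (p : 'S_n) : decb blk p ->
  forall i i' : 'I_n, blk i == c -> blk i' == c -> p i == i -> p i' == i' -> i = i'.
Proof.
move=> /forallP D i i' bi bi' /eqP fi /eqP fi'.
case: (ltngtP i i') => h; last by apply: val_inj.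
  have := forallP (D i) i'; rewrite h (eqP bi) (eqP bi') eqxx /= fi fi'.
  by rewrite ltnNge (ltnW h).
have := forallP (D i') i; rewrite h (eqP bi) (eqP bi') eqxx /= fi fi'.
by rewrite ltnNge (ltnW h).
Qed.

Lemma cs_uniq n blk c st L (q : 'S_n)
  (H1 : forall x, (blk x == c) = (st <= x <= st + L)) (H3 : st + L <= n) :
  forall i i' : 'I_n.+1, blk i == c -> blk i' == c ->
    consb blk i i q -> consb blk i' i' q -> i = i'.
Proof.
suff S : forall i i' : 'I_n.+1, i < i' -> blk i == c -> blk i' == c ->
    consb blk i i q -> consb blk i' i' q -> False.
  move=> i i' bi bi' ci ci'; case: (ltngtP i i') => h.
  - by case: (S _ _ h bi bi' ci ci').
  - by case: (S _ _ h bi' bi ci' ci).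
  - by apply: val_inj.
move=> i i' h bi bi' /forallP ci /forallP ci'.
have ilt : i < n by move: bi'; rewrite H1; lia.
pose j := Ordinal ilt.
have := ci j; have := ci' j.
have e1 : bump i' j = i by rewrite /bump /= leqNgt h.
have e2 : blk (bump i j) == blk i.
  rewrite (eqP bi) H1 /bump /= leqnn; move: bi bi'; rewrite !H1; lia.
rewrite e1 e2 (eqP bi) (eqP bi') eqxx /= h ltnn /= => /eqP A /eqP B.
have : i' <= q j by rewrite -A.
have : q j < i by rewrite ltnNge -B.
lia.
Qed.

Lemma cs_nf n blk blk' c (q : 'S_n) (i : 'I_n.+1)
  (H2 : forall j, blk (bump i j) = blk' j) :
  blk i == c -> consb blk i i q -> nfb blk' c q.
Proof.
move=> bi /forallP ci; apply/forallP => j; apply/implyP => bj.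
apply/negP => /eqP fj; have := ci j.
rewrite H2 (eqP bi) bj /= fj => /eqP; rewrite ltnNge; by case: (i <= j).
Qed.

Lemma dec_le n blk (q : 'S_n) (j k : 'I_n) : decb blk q -> blk j = blk k ->
  j <= k -> q k <= q j.
Proof.
move=> /forallP D bjk; rewrite leq_eqVlt => /orP[/eqP e|h].
  by have -> : j = k by apply: val_inj.
by have := forallP (D j) k; rewrite h bjk eqxx /= => /ltnW.
Qed.

Lemma nf_cs n blk blk' c st L (q : 'S_n)
  (H1 : forall x, (blk x == c) = (st <= x <= st + L))
  (H1' : forall x, (blk' x == c) = (st <= x < st + L))
  (H2 : forall i : nat, st <= i <= st + L -> forall j, blk (bump i j) = blk' j)
  (H3 : st + L <= n) :
  decb blk' q -> nfb blk' c q -> exists i : 'I_n.+1, (blk i == c) && consb blk i i q.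
Proof.
move=> D /forallP NF.
pose P x := (st + L <= x) ||
  [exists j : 'I_n, (val j == x) && (blk' j == c) && (q j < j)].
have PE : exists x, P x by exists (st + L); rewrite /P leqnn.
case: (ex_minnP PE) => i Pi Mi.
have ile : i <= st + L by apply: Mi; rewrite /P leqnn.
have ige : st <= i.
  move: Pi; case/orP => [h|/existsP[j /andP[/andP[/eqP ji bj] _]]]; first lia.
  by rewrite -ji; rewrite H1' in bj; case/andP: bj.
have iltn : i < n.+1 by lia.
exists (Ordinal iltn); rewrite H1 /= ige ile /=.
apply/forallP => j; apply/implyP => bj.
have bj' : blk' j == c by rewrite -(H2 i) ?ige ?ile // (eqP bj) H1 ige ile.
have jr := bj'; rewrite H1' in jr.
case: (ltnP j i) => ji /=.
  have [i' ei] : exists i', i = i'.+1 by exists i.-1; lia.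
  subst i; rename i' into i.
  have i1 : i < n by lia.
  pose k := Ordinal i1.
  have nPk : ~~ P k.
    apply/negP => Pk; have := Mi _ Pk; rewrite /=; lia.
  have bk : blk' k == c by rewrite H1' /=; lia.
  have qk : i.+1 <= q k.
    move: nPk; rewrite /P negb_or => /andP[_ /existsP NE].
    have nq : ~~ (q k < k) by apply/negP => h; apply: NE; exists k; rewrite eqxx bk h.
    have := NF k; rewrite bk /= => nk.
    move: nq nk; rewrite -ltnNge /= => h1 h2.
    have : val (q k) != i by apply: contra h2 => /eqP e; apply/eqP/val_inj.
    move=> /eqP h3; rewrite /= in h1 h3 *; lia.
  have : q k <= q j by apply: dec_le D _ _; [rewrite (eqP bj') (eqP bk) | rewrite /=; lia].
  move=> h; apply/eqP; symmetry; apply/idP; lia.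
have ilt : i < st + L by lia.
move: Pi; rewrite /P leqNgt ilt /= => /existsP[j0 /andP[/andP[/eqP j0i bj0] qj0]].
have : q j <= q j0 by apply: dec_le D _ _; [rewrite (eqP bj') (eqP bj0) | lia].
move=> h; apply/eqP; symmetry; apply/negbTE; rewrite -ltnNge; lia.
Qed.

Lemma decb_ext n (b1 b2 : nat -> nat) (p : 'S_n) : (forall x, b1 x = b2 x) ->
  decb b1 p = decb b2 p.
Proof. by move=> e; rewrite /decb; apply: eq_forallb => i; apply: eq_forallb => j; rewrite !e. Qed.

Lemma nfb_ext n (b1 b2 : nat -> nat) c (p : 'S_n) : (forall x, b1 x = b2 x) ->
  nfb b1 c p = nfb b2 c p.
Proof. by move=> e; rewrite /nfb; apply: eq_forallb => i; rewrite !e. Qed.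

Lemma step n blk blk' c st L (E : pred 'S_n.+1) (E' : pred 'S_n)
  (H1 : forall x, (blk x == c) = (st <= x <= st + L))
  (H1' : forall x, (blk' x == c) = (st <= x < st + L))
  (H2 : forall i : nat, st <= i <= st + L -> forall j, blk (bump i j) = blk' j)
  (H3 : st + L <= n)
  (HE : forall (i : 'I_n.+1) q, blk i == c -> E (lift_perm i i q) = E' q) :
  #|[set p : 'S_n.+1 | decb blk p && E p]| =
  #|[set p : 'S_n.+1 | decb blk p && E p && nfb blk c p]| +
  #|[set q : 'S_n | decb blk' q && E' q && nfb blk' c q]|.
Proof.
rewrite (@card_ssum _ (fun p : 'S_n.+1 => decb blk p && E p)).
rewrite (@card_ssum _ (fun p : 'S_n.+1 => decb blk p && E p && nfb blk c p)).
rewrite (@card_ssum _ (fun q : 'S_n => decb blk' q && E' q && nfb blk' c q)).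
have sp : forall p : 'S_n.+1, (decb blk p && E p : nat) =
   (decb blk p && E p && nfb blk c p) + (decb blk p && E p && ~~ nfb blk c p).
  by move=> p; case: (decb blk p && E p); case: (nfb blk c p).
rewrite (eq_bigr _ (fun p _ => sp p)) big_split /=; congr (_ + _).
have S1 : forall p : 'S_n.+1, (decb blk p && E p && ~~ nfb blk c p : nat) =
   \sum_(i : 'I_n.+1 | blk i == c) ((p i == i) && (decb blk p && E p) : nat).
  move=> p; case: (boolP (decb blk p && E p)) => /= DE; last by rewrite big1 // => i _; rewrite andbF.
  under eq_bigr do rewrite andbT.
  rewrite sum_uniq; last first.
    by move=> i i' bi bi' fi fi'; apply: (fix_uniq (proj1 (andP DE)) bi bi' fi fi').
  rewrite /nfb negb_forall; congr (nat_of_bool _); apply: eq_existsb => i.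
  by rewrite negb_imply negbK.
rewrite (eq_bigr _ (fun p _ => S1 p)) exchange_big /=.
have S2 : forall i : 'I_n.+1, blk i == c ->
   \sum_(p : 'S_n.+1) ((p i == i) && (decb blk p && E p) : nat) =
   \sum_(q : 'S_n) (decb blk' q && E' q && consb blk i i q : nat).
  move=> i bi.
  rewrite -(@card_ssum _ (fun p : 'S_n.+1 => (p i == i) && (decb blk p && E p))).
  rewrite -(@card_ssum _ (fun q : 'S_n => decb blk' q && E' q && consb blk i i q)).
  rewrite card_fix; apply: eq_card => q; rewrite !inE.
  rewrite dec_lift HE // (decb_ext _ (H2 _ _)); last by rewrite -H1.
  by case: (decb blk' q); case: (E' q); case: (consb blk i i q).
rewrite (eq_bigr _ S2) exchange_big /=; apply: eq_bigr => q _.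
case: (boolP (decb blk' q && E' q)) => /= DE; last first.
  by rewrite big1 // => i _; rewrite (negbTE DE).
rewrite sum_uniq; last by move=> i i' bi bi'; apply: (cs_uniq H1 H3 bi bi').
case: (boolP (nfb blk' c q)) => NF.
  have [i /andP[bi ci]] := nf_cs H1 H1' H2 H3 (proj1 (andP DE)) NF.
  by apply/eqP; rewrite eqb1; apply/existsP; exists i; rewrite bi ci.
apply/eqP; rewrite eqb0; apply/existsP => -[i /andP[bi ci]].
have H2i : forall j, blk (bump i j) = blk' j by apply: H2; rewrite -H1.
by move/negP: NF; apply; apply: (cs_nf H2i bi ci).
Qed.

Definition firstb (blk : nat -> nat) (i : nat) := (i == 0) || (blk i.-1 != blk i).

Lemma T_first n blk (i : 'I_n.+1) (mono : forall x y, x <= y -> blk x <= blk y) :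
  #|[set p : 'S_n.+1 | (p i == ord_max) && decb blk p]| =
  firstb blk i * #|[set q : 'S_n | decb (fun j => blk (bump i j)) q]|.
Proof.
rewrite card_fix.
have CE : forall q : 'S_n, consb blk i (@ord_max n) q = firstb blk i.
  move=> q; rewrite /consb /firstb.
  apply/forallP/idP.
    move=> H; case: (posnP i) => [->|ip] //=.
    apply/negP => /eqP e.
    have ilt : i.-1 < n by have := ltn_ord i; lia.
    have b1 : bump i i.-1 = i.-1.
      rewrite /bump; have -> : (i <= i.-1) = false by apply/negbTE; lia. by [].
    have h1 : i.-1 < i by lia.
    have h2 : (n <= q (Ordinal ilt)) = false by rewrite leqNgt ltn_ord.
    by have := H (Ordinal ilt); rewrite /= b1 e eqxx h1 h2.
  move=> F j; apply/implyP => bj; have h2 : (n <= q j) = false by rewrite leqNgt ltn_ord.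
  rewrite /= h2.
  rewrite eqbF_neg; apply/negP => ji; move: bj; rewrite /bump leqNgt ji add0n => bj.
  case/orP: F => [/eqP i0|]; first by rewrite i0 in ji.
  have m1 := mono _ _ (ltnW ji) ; have m2 : j <= i.-1 by lia.
  have := mono _ _ m2; have : i.-1 <= i by lia. move=> /mono m3 m4.
  by rewrite (eqP bj) in m4; move/negP; apply; apply/eqP; apply/anti_leq; rewrite m3 m4.
have -> : #|[set q : 'S_n | decb blk (lift_perm i ord_max q)]| =
   #|[set q : 'S_n | decb (fun j => blk (bump i j)) q && firstb blk i]|.
  by apply: eq_card => q; rewrite !inE dec_lift CE.
case: (firstb blk i).
  by rewrite mul1n; apply: eq_card => q; rewrite !inE andbT.
by rewrite mul0n; apply/eqP; rewrite cards_eq0; apply/eqP/setP => q; rewrite !inE andbF.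
Qed.

Ltac blk_tac :=
  rewrite /block_of;
  repeat match goal with |- context[bump ?a ?b] =>
    rewrite /bump; case: (leqP a b) => ?; rewrite ?add0n ?add1n end;
  repeat (case: ifP => [/idP ?|/negbT ?]); simpl; try lia.

Lemma block_mono l1 l2 l3 x y : x <= y -> block_of l1 l2 l3 x <= block_of l1 l2 l3 y.
Proof. move=> h. blk_tac. Qed.

Lemma blk_b0 l1 l2 l3 j : 0 < l1 -> block_of l1 l2 l3 (bump 0 j) = block_of l1.-1 l2 l3 j.
Proof. move=> h; blk_tac. Qed.
Lemma blk_b1 l1 l2 l3 j : 0 < l2 -> block_of l1 l2 l3 (bump l1 j) = block_of l1 l2.-1 l3 j.
Proof. move=> h; blk_tac. Qed.
Lemma blk_b2 l1 l2 l3 j : 0 < l3 -> block_of l1 l2 l3 (bump (l1 + l2) j) = block_of l1 l2 l3.-1 j.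
Proof. move=> h; blk_tac. Qed.
Lemma blk_b3 l1 l2 l3 j : block_of l1 l2 l3 (bump (l1 + l2 + l3) j) = block_of l1 l2 l3 j.
Proof. blk_tac. Qed.
Lemma blk_H1a l1 l2 l3 x : (block_of l1.+1 l2 l3 x == 0) = (0 <= x <= 0 + l1).
Proof. blk_tac. Qed.
Lemma blk_H1a' l1 l2 l3 x : (block_of l1 l2 l3 x == 0) = (0 <= x < 0 + l1).
Proof. blk_tac. Qed.
Lemma blk_H2a l1 l2 l3 i : 0 <= i <= 0 + l1 -> forall j,
  block_of l1.+1 l2 l3 (bump i j) = block_of l1 l2 l3 j.
Proof. move=> h j; blk_tac. Qed.
Lemma blk_H1b l1 l2 l3 x : (block_of l1 l2.+1 l3 x == 1) = (l1 <= x <= l1 + l2).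
Proof. blk_tac. Qed.
Lemma blk_H1b' l1 l2 l3 x : (block_of l1 l2 l3 x == 1) = (l1 <= x < l1 + l2).
Proof. blk_tac. Qed.
Lemma blk_H2b l1 l2 l3 i : l1 <= i <= l1 + l2 -> forall j,
  block_of l1 l2.+1 l3 (bump i j) = block_of l1 l2 l3 j.
Proof. move=> h j; blk_tac. Qed.

Definition Tn n l1 l2 l3 := #|[set q : 'S_n | decb (block_of l1 l2 l3) q]|.

Lemma range_sum (F : nat -> nat) a b : a <= b ->
  (forall i, a < i < b -> F i = 0) -> \sum_(a <= i < b) F i = (a < b) * F a.
Proof.
move=> ab H; rewrite leq_eqVlt in ab; case/orP: ab => [/eqP <-|ab].
  by rewrite big_geq // ltnn.
rewrite big_ltn // ab mul1n big1_seq ?addn0 // => i /andP[_].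
rewrite mem_iota => h; apply: H; lia.
Qed.

Lemma T_rec n l1 l2 l3 : l1 + l2 + l3 <= n.+1 ->
  Tn n.+1 l1 l2 l3 = (0 < l1) * Tn n l1.-1 l2 l3 + (0 < l2) * Tn n l1 l2.-1 l3
    + (0 < l3) * Tn n l1 l2 l3.-1 + (l1 + l2 + l3 < n.+1) * Tn n l1 l2 l3.
Proof.
move=> hL.
set blk := block_of l1 l2 l3.
have S : Tn n.+1 l1 l2 l3 =
    \sum_(i < n.+1) #|[set p : 'S_n.+1 | (p i == ord_max) && decb blk p]|.
  rewrite /Tn (@card_ssum _ (fun p : 'S_n.+1 => decb blk p)).
  under [RHS]eq_bigr => i _ do rewrite (@card_ssum _ (fun p : 'S_n.+1 => (p i == ord_max) && decb blk p)).
  rewrite exchange_big /=; apply: eq_bigr => p _.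
  case: (boolP (decb blk p)) => D; last by rewrite big1 // => i _; rewrite andbF.
  under eq_bigr do rewrite andbT.
  rewrite (@sum_uniq _ xpredT); last by move=> i i' _ _ /eqP a /eqP b; apply: (@perm_inj _ p); rewrite a b.
  by apply/esym/eqP; rewrite eqb1; apply/existsP; exists ((p^-1)%g ord_max); rewrite permKV eqxx.
rewrite S.
under eq_bigr => i _ do rewrite (T_first _ (@block_mono l1 l2 l3)).
pose F := fun i : nat => firstb blk i * #|[set q : 'S_n | decb (fun j => blk (bump i j)) q]|.
rewrite (_ : \sum_(i < n.+1) _ = \sum_(0 <= i < n.+1) F i); last by rewrite big_mkord.
have i1 : l1 <= l1 + l2 by lia.
have i2 : l1 + l2 <= l1 + l2 + l3 by lia.
have i0 : 0 <= l1 by [].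
have i3 : l1 + l2 + l3 <= n.+1 by [].
have i4 : l1 + l2 <= n.+1 by lia.
have i5 : l1 <= n.+1 by lia.
rewrite (big_cat_nat i0 i5) /= (big_cat_nat i1 i4) /= (big_cat_nat i2 i3) /=.
have Z : forall i, ~~ firstb blk i -> F i = 0 by move=> i; rewrite /F; case: (firstb blk i).
rewrite !range_sum //; try (move=> i hi; apply: Z; rewrite /firstb /blk; blk_tac).
rewrite !addnA; congr (_ + _ + _ + _).
- case: (posnP l1) => [->|p1] //=; rewrite /F mul1n /firstb eqxx /= mul1n /Tn.
  by rewrite mul1n; apply: eq_card => q; rewrite !inE; apply: decb_ext => j; rewrite /blk blk_b0.
- rewrite (_ : (l1 < l1 + l2) = (0 < l2)); last by lia.
  case: (posnP l2) => [->|p2] //=; rewrite /F mul1n.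
  have -> : firstb blk l1 by rewrite /firstb /blk; blk_tac.
  by rewrite ?mul1n /Tn; apply: eq_card => q; rewrite !inE; apply: decb_ext => j; rewrite /blk blk_b1.
- rewrite (_ : (l1 + l2 < l1 + l2 + l3) = (0 < l3)); last by lia.
  case: (posnP l3) => [->|p3] //=; rewrite /F mul1n.
  have -> : firstb blk (l1 + l2) by rewrite /firstb /blk; blk_tac.
  by rewrite ?mul1n /Tn; apply: eq_card => q; rewrite !inE; apply: decb_ext => j; rewrite /blk blk_b2.
- case: (ltnP (l1 + l2 + l3) n.+1) => p4 //=; rewrite /F mul1n.
  have -> : firstb blk (l1 + l2 + l3) by rewrite /firstb /blk; blk_tac.
  by rewrite ?mul1n /Tn; apply: eq_card => q; rewrite !inE; apply: decb_ext => j; rewrite /blk blk_b3.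
Qed.

Lemma T0 : Tn 0 0 0 0 = 1.
Proof.
rewrite /Tn (_ : [set q : 'S_0 | _] = setT) ?cardsT ?card_Sn //.
by apply/setP => q; rewrite !inE; apply/forallP => -[].
Qed.

Lemma T_fact n : forall l1 l2 l3, l1 + l2 + l3 <= n ->
  Tn n l1 l2 l3 * (l1`! * l2`! * l3`! * (n - (l1 + l2 + l3))`!) = n`!.
Proof.
elim: n => [|n IH] l1 l2 l3 hL.
  have [-> -> ->] : [/\ l1 = 0, l2 = 0 & l3 = 0] by split; lia.
  by rewrite T0.
rewrite T_rec; last by lia.
set X := (l1`! * l2`! * l3`! * (n.+1 - (l1 + l2 + l3))`!).
have t1 : (0 < l1) * Tn n l1.-1 l2 l3 * X = l1 * n`!.
  rewrite /X; case: l1 hL {X} => [|k] hL //=.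
  rewrite (_ : n.+1 - (k.+1 + l2 + l3) = n - (k + l2 + l3)); last by lia.
  have := IH k l2 l3; rewrite factS.
  have h : k + l2 + l3 <= n by lia.
  move=> /(_ h) <-; ring.
have t2 : (0 < l2) * Tn n l1 l2.-1 l3 * X = l2 * n`!.
  rewrite /X; case: l2 hL {X t1} => [|k] hL //=.
  rewrite (_ : n.+1 - (l1 + k.+1 + l3) = n - (l1 + k + l3)); last by lia.
  have := IH l1 k l3; rewrite factS.
  have h : l1 + k + l3 <= n by lia.
  move=> /(_ h) <-; ring.
have t3 : (0 < l3) * Tn n l1 l2 l3.-1 * X = l3 * n`!.
  rewrite /X; case: l3 hL {X t1 t2} => [|k] hL //=.
  rewrite (_ : n.+1 - (l1 + l2 + k.+1) = n - (l1 + l2 + k)); last by lia.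
  have := IH l1 l2 k; rewrite factS.
  have h : l1 + l2 + k <= n by lia.
  move=> /(_ h) <-; ring.
have t4 : (l1 + l2 + l3 < n.+1) * Tn n l1 l2 l3 * X = (n.+1 - (l1 + l2 + l3)) * n`!.
  rewrite /X; case: (ltnP (l1 + l2 + l3) n.+1) => h /=; last first.
    by rewrite (_ : n.+1 - (l1 + l2 + l3) = 0) //; lia.
  rewrite (_ : n.+1 - (l1 + l2 + l3) = (n - (l1 + l2 + l3)).+1); last by lia.
  have := IH l1 l2 l3 h; rewrite factS => <-; ring.
rewrite !mulnDl t1 t2 t3 t4 factS.
rewrite -!mulnDl; congr (_ * _); lia.
Qed.

Definition Kn n (e1 e2 : bool) l1 l2 l3 :=
  #|[set p : 'S_n | decb (block_of l1 l2 l3) p && (e1 ==> nfb (block_of l1 l2 l3) 0 p)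
                  && (e2 ==> nfb (block_of l1 l2 l3) 1 p)]|.

Lemma K_FF n l1 l2 l3 : Kn n false false l1 l2 l3 = Tn n l1 l2 l3.
Proof. by apply: eq_card => p; rewrite !inE !andbT. Qed.

Lemma K_l1_0 n e2 l2 l3 : Kn n true e2 0 l2 l3 = Kn n false e2 0 l2 l3.
Proof.
apply: eq_card => p; rewrite !inE /=.
have -> : nfb (block_of 0 l2 l3) 0 p.
  by apply/forallP => i; apply/implyP; rewrite /block_of; blk_tac.
by rewrite andbT.
Qed.

Lemma K_l2_0 n e1 l1 l3 : Kn n e1 true l1 0 l3 = Kn n e1 false l1 0 l3.
Proof.
apply: eq_card => p; rewrite !inE /=.
have -> : nfb (block_of l1 0 l3) 1 p.
  by apply/forallP => i; apply/implyP; rewrite /block_of; blk_tac.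
by rewrite andbT.
Qed.

Lemma K_rec1 n e2 l1 l2 l3 : l1 <= n ->
  Kn n.+1 false e2 l1.+1 l2 l3 = Kn n.+1 true e2 l1.+1 l2 l3 + Kn n true e2 l1 l2 l3.
Proof.
move=> h.
have HE : forall (i : 'I_n.+1) (q : 'S_n), block_of l1.+1 l2 l3 i == 0 ->
    (e2 ==> nfb (block_of l1.+1 l2 l3) 1 (lift_perm i i q)) = (e2 ==> nfb (block_of l1 l2 l3) 1 q).
  move=> i q bi; rewrite nf_lift.
  have -> : block_of l1.+1 l2 l3 i != 1 by rewrite (eqP bi).
  have H2i := @blk_H2a l1 l2 l3 i; rewrite -(@blk_H1a l1 l2 l3) bi in H2i; have := H2i isT => {}H2i.
  by rewrite /= (nfb_ext _ _ H2i).
have E := @step n (block_of l1.+1 l2 l3) (block_of l1 l2 l3) 0 0 l1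
  (fun p => e2 ==> nfb (block_of l1.+1 l2 l3) 1 p)
  (fun q => e2 ==> nfb (block_of l1 l2 l3) 1 q)
  (@blk_H1a l1 l2 l3) (@blk_H1a' l1 l2 l3) (@blk_H2a l1 l2 l3) h HE.
 rewrite /Kn; rewrite [LHS](_ : _ = #|[set p : 'S_n.+1 | decb (block_of l1.+1 l2 l3) p && (e2 ==> nfb (block_of l1.+1 l2 l3) 1 p)]|); last first.
  by apply: eq_card => p; rewrite !inE /= ?andbT.
rewrite E; congr (_ + _); apply: eq_card => p; rewrite !inE /=;
  by case: (decb _ p); case: (nfb _ 0 p); case: (e2 ==> _).
Qed.

Lemma K_rec2 n e1 l1 l2 l3 : l1 + l2 <= n ->
  Kn n.+1 e1 false l1 l2.+1 l3 = Kn n.+1 e1 true l1 l2.+1 l3 + Kn n e1 true l1 l2 l3.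
Proof.
move=> h.
have HE : forall (i : 'I_n.+1) (q : 'S_n), block_of l1 l2.+1 l3 i == 1 ->
    (e1 ==> nfb (block_of l1 l2.+1 l3) 0 (lift_perm i i q)) = (e1 ==> nfb (block_of l1 l2 l3) 0 q).
  move=> i q bi; rewrite nf_lift.
  have -> : block_of l1 l2.+1 l3 i != 0 by rewrite (eqP bi).
  have H2i := @blk_H2b l1 l2 l3 i; rewrite -(@blk_H1b l1 l2 l3) bi in H2i; have := H2i isT => {}H2i.
  by rewrite /= (nfb_ext _ _ H2i).
have E := @step n (block_of l1 l2.+1 l3) (block_of l1 l2 l3) 1 l1 l2
  (fun p => e1 ==> nfb (block_of l1 l2.+1 l3) 0 p)
  (fun q => e1 ==> nfb (block_of l1 l2 l3) 0 q)
  (@blk_H1b l1 l2 l3) (@blk_H1b' l1 l2 l3) (@blk_H2b l1 l2 l3) h HE.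
 rewrite /Kn; rewrite [LHS](_ : _ = #|[set p : 'S_n.+1 | decb (block_of l1 l2.+1 l3) p && (e1 ==> nfb (block_of l1 l2.+1 l3) 0 p)]|); last first.
  by apply: eq_card => p; rewrite !inE /= ?andbT.
rewrite E; congr (_ + _); apply: eq_card => p; rewrite !inE /=.
Qed.

Open Scope ring_scope.

Lemma U_formula l2 : forall n l1 l3, (l1 + l2 <= n)%N ->
  (Kn n false true l1 l2 l3)%:Z =
  \sum_(b2 < l2.+1) (-1) ^+ b2 * (Tn (n - b2) l1 (l2 - b2) l3)%:Z.
Proof.
elim: l2 => [|l2 IH] n l1 l3 h.
  by rewrite K_l2_0 K_FF big_ord_recl big_ord0 /= subn0 expr0 mul1r addr0.
case: n h => [|n] h; first by lia.
have h' : (l1 + l2 <= n)%N by lia.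
have R := K_rec2 false l3 h'.
have -> : Kn n.+1 false true l1 l2.+1 l3 =
    (Kn n.+1 false false l1 l2.+1 l3 - Kn n false true l1 l2 l3)%N by rewrite R addnK.
rewrite -subzn; last by rewrite R leq_addl.
rewrite K_FF IH // [RHS]big_ord_recl /= subn0 expr0 mul1r; congr (_ + _).
rewrite -sumrN; apply: eq_bigr => b _.
by rewrite /bump /= add1n !subSS exprS mulN1r mulNr.
Qed.

Lemma D_formula l1 : forall n l2 l3, (l1 + l2 <= n)%N ->
  (Kn n true true l1 l2 l3)%:Z =
  \sum_(b1 < l1.+1) (-1) ^+ b1 * (Kn (n - b1) false true (l1 - b1) l2 l3)%:Z.
Proof.
elim: l1 => [|l1 IH] n l2 l3 h.
  by rewrite K_l1_0 big_ord_recl big_ord0 /= subn0 expr0 mul1r addr0.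
case: n h => [|n] h; first by lia.
have h' : (l1 <= n)%N by lia.
have R := K_rec1 true l2 l3 h'.
have -> : Kn n.+1 true true l1.+1 l2 l3 =
    (Kn n.+1 false true l1.+1 l2 l3 - Kn n true true l1 l2 l3)%N by rewrite R addnK.
rewrite -subzn; last by rewrite R leq_addl.
rewrite IH; last by lia.
rewrite [RHS]big_ord_recl /= subn0 expr0 mul1r; congr (_ + _).
rewrite -sumrN; apply: eq_bigr => b _.
by rewrite /bump /= add1n !subSS exprS mulN1r mulNr.
Qed.

Close Scope ring_scope.

Lemma Tn_binom N x y s m : x + y = N -> m <= s -> m <= x -> s - m <= y ->
  Tn N (x - m) (y - (s - m)) m = 'C(N, s) * 'C(s, m) * 'C(N - s, x - m).
Proof.
move=> eN ms mx smy.
have hl : x - m + (y - (s - m)) + m <= N by lia.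
have TF := T_fact hl.
have e1 : N - (x - m + (y - (s - m)) + m) = s - m by lia.
rewrite e1 in TF.
set F := (x - m)`! * (y - (s - m))`! * m`! * (s - m)`!.
have Fp : 0 < F by rewrite /F !muln_gt0 !fact_gt0.
apply/eqP; rewrite -(eqn_pmul2r Fp) TF; apply/eqP.
have sN : s <= N by lia.
have b1 := bin_fact sN.
have b2 := bin_fact ms.
have xN : x - m <= N - s by lia.
have b3 := bin_fact xN.
have e2 : N - s - (x - m) = y - (s - m) by lia.
rewrite e2 in b3.
rewrite -b1 -b2 -b3 /F; ring.
Qed.

Lemma vsum x y s : s <= x + y ->
  \sum_(0 <= m < s.+1 | (m <= x) && (s - m <= y)) 'C(s, m) * 'C(x + y - s, x - m)
  = 'C(x + y, x).
Proof.
move=> sN.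
have V := binomial.Vandermonde s (x + y - s) x.
rewrite (_ : s + (x + y - s) = x + y) in V; last by lia.
rewrite -V big_mkord.
rewrite (big_ord_widen (x + s).+1 (fun m => 'C(s, m) * 'C(x + y - s, x - m))); last by lia.
rewrite (big_ord_widen_cond (x + s).+1 (fun m : nat => (m <= x) && (s - m <= y)) (fun m => 'C(s, m) * 'C(x + y - s, x - m))); last by lia.
rewrite big_mkcond [RHS]big_mkcond; apply: eq_bigr => m _.
case: (leqP m x) => mx /=; last by rewrite ltnS leqNgt mx.
rewrite [m < x.+1]ltnS mx.
case: (leqP m s) => ms; rewrite ?ltnS ?ms ?andbT ?andbF.
  case: (leqP (s - m) y) => smy //=.
  by rewrite (@bin_small (x + y - s) (x - m)) ?muln0 //; lia.
by rewrite [m <= s]leqNgt ms andbF bin_small.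
Qed.

Lemma inner a1 a2 s b1 b2 :
  \sum_(0 <= m < s.+1 | (m <= a1) && (s - m <= a2))
     ((b1 <= a1 - m) && (b2 <= a2 - (s - m))) *
     Tn (a1 + a2 - b1 - b2) (a1 - m - b1) (a2 - (s - m) - b2) m
  = ((b1 <= a1) && (b2 <= a2)) *
    ('C(a1 - b1 + (a2 - b2), s) * 'C(a1 - b1 + (a2 - b2), a1 - b1)).
Proof.
case: (boolP ((b1 <= a1) && (b2 <= a2))) => H; last first.
  rewrite mul0n big1 // => m _.
  case: (boolP ((b1 <= a1 - m) && (b2 <= a2 - (s - m)))) => // H2.
  by exfalso; move/negP: H; apply; lia.
rewrite mul1n.
set x := a1 - b1; set y := a2 - b2.
have eN : a1 + a2 - b1 - b2 = x + y by rewrite /x /y; lia.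
rewrite eN.
rewrite (_ : \sum_(0 <= m < s.+1 | (m <= a1) && (s - m <= a2)) _ =
   \sum_(0 <= m < s.+1 | (m <= x) && (s - m <= y)) 'C(x + y, s) * ('C(s, m) * 'C(x + y - s, x - m))).
  case: (leqP s (x + y)) => sN; last by rewrite bin_small // mul0n big1.
  by rewrite -big_distrr /= vsum.
rewrite big_mkcond [RHS]big_mkcond big_nat_cond [RHS]big_nat_cond.
apply: eq_bigr => m /andP[/andP[_ ms] _].
rewrite ltnS in ms.
case: (boolP ((m <= a1) && (s - m <= a2))) => h1;
  case: (boolP ((m <= x) && (s - m <= y))) => h2 //=.
- have h3 : (b1 <= a1 - m) && (b2 <= a2 - (s - m)) by rewrite /x /y in h2 *; lia.
  rewrite h3 mul1n.
  have -> : a1 - m - b1 = x - m by rewrite /x; lia.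
  have -> : a2 - (s - m) - b2 = y - (s - m) by rewrite /y; lia.
  rewrite (@Tn_binom (x + y) x y s m) //; try lia.
- have h3 : ~~ ((b1 <= a1 - m) && (b2 <= a2 - (s - m))) by rewrite /x /y in h2 *; lia.
  by rewrite (negbTE h3).
- by exfalso; move/negP: h1; apply; rewrite /x /y in h2 *; lia.
Qed.

Open Scope ring_scope.

Lemma Nm_K a1 a2 s m : Nm a1 a2 s m = Kn (a1 + a2) true true (a1 - m) (a2 - (s - m)) m.
Proof.
apply: eq_card => p; rewrite !inE /= -andbA; congr (_ && _).
apply/forallP/andP.
  move=> H; split; apply/forallP => i; apply/implyP => /eqP bi;
    by have := H i; rewrite bi.
move=> [/forallP H0 /forallP H1] i; apply/implyP => bi.
have : (block_of (a1 - m) (a2 - (s - m)) m i == 0%N) || (block_of (a1 - m) (a2 - (s - m)) m i == 1%N) by lia.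
by case/orP => b; [have := H0 i | have := H1 i]; rewrite b.
Qed.

Lemma KTT l1 l2 l3 n : (l1 + l2 <= n)%N ->
  (Kn n true true l1 l2 l3)%:Z =
  \sum_(b1 < l1.+1) \sum_(b2 < l2.+1)
     (-1) ^+ (b1 + b2) * (Tn (n - b1 - b2) (l1 - b1) (l2 - b2) l3)%:Z.
Proof.
move=> h; rewrite D_formula //; apply: eq_bigr => b1 _.
rewrite U_formula; last by have := ltn_ord b1; lia.
rewrite big_distrr /=; apply: eq_bigr => b2 _.
by rewrite /= exprD mulrA.
Qed.

Lemma binZ_nat (N K : nat) : binZ N%:Z K%:Z = ('C(N, K))%:Z.
Proof.
rewrite /binZ lez_nat /=; case: (leqP K N) => // h.
by rewrite bin_small.
Qed.

Lemma binZ0 (N K : int) : ~~ ((0 <= K) && (K <= N)) -> binZ N K = 0.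
Proof. by rewrite /binZ => /negbTE ->. Qed.

Lemma sum_natz (I : Type) (r : seq I) (P : pred I) (F : I -> nat) :
  (\sum_(i <- r | P i) F i)%N%:Z = \sum_(i <- r | P i) (F i)%:Z.
Proof.
rewrite -natz natr_sum; apply: eq_bigr => i _; by rewrite natz.
Qed.

Close Scope ring_scope.
Open Scope ring_scope.

Lemma widen_sum (F : nat -> int) l n : (l <= n)%N ->
  \sum_(b < l.+1) F b = \sum_(b < n.+1) (if (b <= l)%N then F b else 0).
Proof.
move=> h; rewrite (big_ord_widen n.+1 F) //; rewrite big_mkcond /=.
by apply: eq_bigr => b _; rewrite ltnS.
Qed.

Unset Implicit Arguments.
Theorem mainTheorem12 (a1 a2 s : nat) :
  (G a1 a2 s)%:Z =
  \sum_(b1 < (a1 + a2).+1) \sum_(b2 < (a1 + a2).+1)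
    (-1) ^+ (b1 + b2)%N *
    binZ ((a1 + a2)%:Z - b1%:Z - b2%:Z) s%:Z *
    binZ ((a1 + a2)%:Z - b1%:Z - b2%:Z) (a1%:Z - b1%:Z).
Proof.
rewrite /G sum_natz.
have NmE : forall m, (m <= a1)%N && (s - m <= a2)%N -> (Nm a1 a2 s m)%:Z =
  \sum_(b1 < (a1 + a2).+1) \sum_(b2 < (a1 + a2).+1) (-1) ^+ (b1 + b2)%N *
    (((b1 <= a1 - m)%N && (b2 <= a2 - (s - m))%N) *
       Tn (a1 + a2 - b1 - b2) (a1 - m - b1) (a2 - (s - m) - b2) m)%N%:Z.
  move=> m hm; rewrite Nm_K KTT; last by lia.
  rewrite (@widen_sum (fun b1 : nat => \sum_(b2 < (a2 - (s - m)).+1) (-1) ^+ (b1 + b2) *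
     (Tn (a1 + a2 - b1 - b2) (a1 - m - b1) (a2 - (s - m) - b2) m)%:Z) (a1 - m) (a1 + a2)); last by lia.
  apply: eq_bigr => b1 _.
  case: (boolP (b1 <= a1 - m)%N) => h1 /=.
    rewrite (@widen_sum (fun b2 : nat => (-1) ^+ (b1 + b2) *
     (Tn (a1 + a2 - b1 - b2) (a1 - m - b1) (a2 - (s - m) - b2) m)%:Z) (a2 - (s - m)) (a1 + a2)); last by lia.
    apply: eq_bigr => b2 _.
    by case: (b2 <= a2 - (s - m))%N; rewrite ?mul1n ?mul0n ?mulr0.
  by rewrite big1 // => b2 _; rewrite mul0n mulr0.
rewrite (eq_bigr _ NmE).
rewrite exchange_big /=; apply: eq_bigr => b1 _.
rewrite exchange_big /=; apply: eq_bigr => b2 _.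
rewrite -big_distrr /= -mulrA -sum_natz inner; congr (_ * _).
case: (boolP ((b1 <= a1)%N && (b2 <= a2)%N)) => H.
  rewrite mul1n.
  have -> : (a1 + a2)%:Z - b1%:Z - b2%:Z = (a1 - b1 + (a2 - b2))%N%:Z by lia.
  have -> : a1%:Z - b1%:Z = (a1 - b1)%N%:Z by lia.
  by rewrite !binZ_nat PoszM.
rewrite mul0n; case: (leqP b1 a1) => h1.
  rewrite [X in _ * X]binZ0 ?mulr0 //; lia.
rewrite [X in _ * X]binZ0 ?mulr0 //; lia.
Qed.
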